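(* Let $\mathbb{X}$ be a Banach space, $\varphi:\mathbb{X}\to\mathbb{R}\cup\{+\infty\}$ a proper lower semicontinuous function, $\mathbf{S}_\varphi:=\{x:\varphi(x)\le0\}$ and $\bar x\in\mathbf{S}_\varphi$. Assume ${\rm bd}(\mathbf{S}_\varphi)\subseteq\varphi^{-1}(0)$, $\varphi$ has the epigraphical Shapiro first order contact property at $\bar x$, and $\mathbf{S}_\varphi$ has the Shapiro first order contact property around $\bar x$. For $x\in\mathbb{X}$ put $S_x:=\{u\in\mathbb{X}:\varphi'_H(x;u)\le0\}$. (i) If there exist $\tau,\delta_0>0$ with $\mathbf{d}(x,\mathbf{S}_\varphi)\le\tau\max\{\varphi(x),0\}$ for all $x\in\mathbf{B}(\bar x,\delta_0)$, then there exists $\delta>0$ such that for every $x\in{\rm bd}(\mathbf{S}_\varphi)\cap\mathbf{B}(\bar x,\delta)$, $$\mathbf{d}(h,S_x)\le\tau\max\{\varphi'_H(x;h),0\}\quad\text{for all }h\in\mathbb{X}.$$ (ii) Suppose there is a neighborhood $U$ of $\bar x$ such that $\{h\in\mathbb{X}:\varphi'_H(x;h)=0\}\subseteq\mathbf{T}^{\mathbf B}(\mathbf{S}_\varphi,x)$ for all $x\in U\cap{\rm bd}(\mathbf{S}_\varphi)$. Then the inequality $\varphi(x)\le0$ has a local error bound at $\bar x$ if and only if there exist $\tau,\delta>0$ such that for every $x\in{\rm bd}(\mathbf{S}_\varphi)\cap\mathbf{B}(\bar x,\delta)$, $\mathbf{d}(h,S_x)\le\tau\max\{\varphi'_H(x;h),0\}$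 for all $h\in\mathbb{X}$.
   Context: $\mathbf{B}(a,\delta)$ is the open ball with center $a$ and radius $\delta$; ${\rm bd}$ denotes boundary; $\mathbf{d}(x,D):=\inf\{\|x-y\|:y\in D\}$. $\varphi'_H(x;h):=\liminf_{t\to0^+,\,h'\to h}\frac{\varphi(x+th')-\varphi(x)}{t}$. Bouligand tangent cone $\mathbf{T}^{\mathbf B}(C,c)$: all $v$ with $v_n\to v$, $t_n\downarrow0$, $c+t_nv_n\in C$. A closed set $C$ has the Shapiro first order contact property at $a\in C$ if for every $\varepsilon>0$ there is $\delta>0$ with $\mathbf{d}(x-u,\mathbf{T}^{\mathbf B}(C,u))\le\varepsilon\|x-u\|$ for all $x,u\in C\cap\mathbf{B}(a,\delta)$; around $\bar x$ means at every point of $C\cap U$ for some neighborhood $U$ of $\bar x$. Epigraphical Shapiro first order contact property at $\bar x$: ${\rm epi}(\varphi)\subseteq\mathbb{X}\times\mathbb{R}$ (norm $\|x\|+|\alpha|$) has the Shapiro first order contact property at $(\bar x,\varphi(\bar x))$. Local error bound at $\bar x$: there exist $\tau,\delta>0$ with $\mathbf{d}(x,\mathbf{S}_\varphi)\le\tau\max\{\varphi(x),0\}$ for all $x\in\mathbf{B}(\bar x,\delta)$. *)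

(* Defs.v *)
From HB Require Import structures.
From mathcomp Require Import all_boot all_order all_algebra.
From mathcomp Require Import all_classical all_reals all_analysis.
Set Implicit Arguments. Unset Strict Implicit. Unset Printing Implicit Defensive.
Import Order.TTheory GRing.Theory Num.Theory.
Import numFieldNormedType.Exports.
Local Open Scope classical_set_scope.
Local Open Scope ring_scope.

Section Defs.
Context {R : realType} {X : normedModType R}.

Definition bd (A : set X) : set X := closure A `\` interior A.

(* d(x, D) = inf { ||x - y|| : y in D }, extended-real valued (+oo if D empty) *)
Definition dist (x : X) (D : set X) : \bar R :=
  ereal_inf [set (`|x - y|)%:E | y in D].

Definition Sphi (phi : X -> \bar R) : set X := [set x | (phi x <= 0)%E].

Definition proper_fun (phi : X -> \bar R) : Prop :=
  (forall x, phi x != -oo%E) /\ (exists x, (phi x < +oo)%E).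

(* lower Dini-Hadamard directional derivative:
   liminf_{t -> 0+, h' -> h} (phi(x + t h') - phi(x)) / t,
   written as sup over eps > 0 of the inf over 0 < t < eps, ||h' - h|| < eps *)
Definition dH (phi : X -> \bar R) (x h : X) : \bar R :=
  ereal_sup [set ereal_inf
      [set ((phi (x + th.1 *: th.2)%R - phi x) * (th.1^-1)%:E)%E
        | th in [set th : R * X | 0 < th.1 < eps /\ `|th.2 - h| < eps]]
    | eps in [set eps : R | 0 < eps]].

Definition tangent_cone (C : set X) (c : X) : set X :=
  [set v | exists (vn : nat -> X) (tn : nat -> R),
      vn @ \oo --> v /\ (forall n, 0 < tn n) /\ tn @ \oo --> 0 /\
      (forall n, C (c + tn n *: vn n))].

Definition shapiro_at (C : set X) (a : X) : Prop :=
  forall eps : R, 0 < eps -> exists2 delta : R, 0 < delta &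
    forall x u, C x -> C u -> `|x - a| < delta -> `|u - a| < delta ->
      (dist (x - u)%R (tangent_cone C u) <= (eps * `|x - u|)%:E)%E.

Definition shapiro_around (C : set X) (abar : X) : Prop :=
  exists2 U, nbhs abar U & forall a, C a -> U a -> shapiro_at C a.

Definition epi (phi : X -> \bar R) : set (X * R) :=
  [set p | (phi p.1 <= p.2%:E)%E].

(* Bouligand tangent cone of epi(phi) at (u, beta) (convergence in X x R
   is componentwise, independent of the chosen product norm) *)
Definition epi_tangent_cone (phi : X -> \bar R) (u : X) (beta : R)
  : set (X * R) :=
  [set vw | exists (vn : nat -> X) (wn : nat -> R) (tn : nat -> R),
      vn @ \oo --> vw.1 /\ wn @ \oo --> vw.2 /\
      (forall n, 0 < tn n) /\ tn @ \oo --> 0 /\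
      (forall n, epi phi (u + tn n *: vn n, beta + tn n * wn n))].

Definition dist_sum (p : X * R) (D : set (X * R)) : \bar R :=
  ereal_inf [set (`|p.1 - q.1| + `|p.2 - q.2|)%:E | q in D].

(* epigraphical Shapiro first order contact property at xbar:
   epi(phi) has the Shapiro property at (xbar, phi xbar) w.r.t. ||x||+|alpha| *)
Definition epi_shapiro_at (phi : X -> \bar R) (xbar : X) : Prop :=
  forall eps : R, 0 < eps -> exists2 delta : R, 0 < delta &
    forall p q, epi phi p -> epi phi q ->
      (`|p.1 - xbar|%:E + `|p.2%:E - phi xbar| < delta%:E)%E ->
      (`|q.1 - xbar|%:E + `|q.2%:E - phi xbar| < delta%:E)%E ->
      (dist_sum ((p.1 - q.1)%R, (p.2 - q.2)%R) (epi_tangent_cone phi q.1 q.2)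
        <= (eps * (`|p.1 - q.1| + `|p.2 - q.2|))%:E)%E.

Definition local_error_bound (phi : X -> \bar R) (xbar : X) : Prop :=
  exists tau delta : R, [/\ 0 < tau, 0 < delta &
    forall x, `|x - xbar| < delta ->
      (dist x (Sphi phi) <= tau%:E * maxe (phi x) 0)%E].

Definition Sx (phi : X -> \bar R) (x : X) : set X :=
  [set u | (dH phi x u <= 0)%E].

End Defs.

(* Main.v *)
Require Import Defs.
From HB Require Import structures.
From mathcomp Require Import all_boot all_order all_algebra.
From mathcomp Require Import all_classical all_reals all_analysis.
From mathcomp Require Import lra ring.
Import Order.TTheory GRing.Theory Num.Theory.
Import numFieldNormedType.Exports.
Local Open Scope classical_set_scope.
Local Open Scope ring_scope.
Section Aux.
Context {R : realType} {X : normedModType R}.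
Implicit Types (phi : X -> \bar R).

Lemma dist_le (x : X) (D : set X) y : D y -> (dist x D <= `|x - y|%:E)%E.
Proof. by move=> Dy; apply: ereal_inf_lbound; exists y. Qed.

Lemma dist_lt (x : X) (D : set X) (r : R) :
  (dist x D < r%:E)%E -> exists2 y, D y & `|x - y| < r.
Proof. by move=> /ereal_inf_lt [_ [y Dy <-]]; rewrite lte_fin => h; exists y. Qed.

Lemma dist_ge0 (x : X) (D : set X) : (0 <= dist x D)%E.
Proof. by apply: le_ereal_inf_tmp => _ [y _ <-]; rewrite lee_fin. Qed.

Lemma ediv_le (a : \bar R) (t w : R) : 0 < t ->
  (a <= (t * w)%:E)%E -> (a * (t^-1)%:E <= w%:E)%E.
Proof.
move=> t0; case: a => [r| |] /=.
- by rewrite -EFinM !lee_fin ler_pdivrMr // mulrC.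
all: try by rewrite leNgt ltry.
all: try by move=> _; rewrite gt0_mulNye ?lte_fin ?invr_gt0 // leNye.
Qed.

Lemma ediv_lt (a : \bar R) (t w : R) : 0 < t ->
  (a * (t^-1)%:E < w%:E)%E -> (a < (t * w)%:E)%E.
Proof.
move=> t0; case: a => [r| |] /=.
- by rewrite -EFinM !lte_fin ltr_pdivrMr // mulrC.
all: try by rewrite gt0_mulye ?lte_fin ?invr_gt0.
all: try by move=> _; rewrite ltNye.
all: try by rewrite ltNye.
Qed.

Lemma tc_scale (C : set X) c v (k : R) : 0 < k ->
  tangent_cone C c v -> tangent_cone C c (k *: v).
Proof.
move=> k0 [vn [tn [vv [tp [t0 Cn]]]]].
exists (fun n => k *: vn n), (fun n => tn n / k); split.
  exact: cvgZl_tmp.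
split; first by move=> n; rewrite divr_gt0.
split; first by rewrite -(mul0r k^-1); apply: cvgMr_tmp.
by move=> n; rewrite scalerA divfK ?gt_eqF.
Qed.

Lemma dH_le_seq phi (x v : X) (vn : nat -> X) (tn wn : nat -> R) (w : R) :
  vn @ \oo --> v -> (forall n, 0 < tn n) -> tn @ \oo --> 0 -> wn @ \oo --> w ->
  (forall n, ((phi (x + tn n *: vn n)%R - phi x) * ((tn n)^-1)%:E <= (wn n)%:E)%E) ->
  (dH phi x v <= w%:E)%E.
Proof.
move=> vv tp t0 ww H.
apply: ge_ereal_sup => _ [eps eps0 <-].
apply/lee_addgt0Pr => e e0.
have : \forall n \near \oo, [/\ `|tn n| < eps, `|v - vn n| < eps & `|w - wn n| < e].
  near=> n; split.
  - by near: n; apply: cvgr0_norm_lt.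
  - by near: n; apply: cvgr_dist_lt.
  - by near: n; apply: cvgr_dist_lt.
move=> [N _ /(_ N (leqnn N))] [h1 h2 h3].
apply: ge_ereal_inf; exists ((phi (x + tn N *: vn N)%R - phi x) * ((tn N)^-1)%:E)%E; last first.
  apply: le_trans (H N) _.
  rewrite -EFinD lee_fin; have := ler_norm (wn N - w).
  by rewrite distrC in h3; lra.
exists (tn N, vn N) => //=; split.
  by rewrite tp /=; move: h1; rewrite gtr0_norm.
by rewrite distrC.
Unshelve. all: by end_near. Qed.


Lemma cvg_inv_bound (V : normedModType R) (u : nat -> V) (l : V) :
  (forall n, `|u n - l| < n.+1%:R^-1) -> u @ \oo --> l.
Proof.
move=> H; apply/cvgrPdist_lt => e e0.
near=> n; rewrite distrC; apply: lt_trans (H n) _.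
by near: n; exact: (near_infty_natSinv_lt (PosNum e0)).
Unshelve. all: by end_near. Qed.

Lemma tc_sub_Sx phi (x : X) : phi x = 0%E ->
  tangent_cone (Sphi phi) x `<=` Sx phi x.
Proof.
move=> Hx v [vn [tn [vv [tp [t0 Cn]]]]].
rewrite /Sx /=.
apply: (@dH_le_seq phi x v vn tn (fun=> 0) 0) => //; first exact: cvg_cst.
move=> n; rewrite Hx sube0; apply: ediv_le => //.
by rewrite mulr0; exact: Cn.
Qed.

Lemma epi_tc_dH phi (x v : X) (w : R) : phi x = 0%E ->
  epi_tangent_cone phi x 0 (v, w) -> (dH phi x v <= w%:E)%E.
Proof.
move=> Hx [vn [wn [tn [vv [ww [tp [t0 En]]]]]]].
apply: (@dH_le_seq phi x v vn tn wn w) => //.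
move=> n; rewrite Hx sube0; apply: ediv_le => //.
by have := En n; rewrite /epi /= add0r.
Qed.

Lemma dHneg_tc phi (x h : X) : phi x = 0%E ->
  (dH phi x h < 0)%E -> tangent_cone (Sphi phi) x h.
Proof.
move=> Hx Hd.
have : forall n : nat, exists th : R * X,
    [/\ 0 < th.1 < n.+1%:R^-1, `|th.2 - h| < n.+1%:R^-1 &
        (phi (x + th.1 *: th.2)%R <= 0)%E].
  move=> n.
  have : (ereal_inf [set ((phi (x + th.1 *: th.2)%R - phi x) * (th.1^-1)%:E)%E
        | th in [set th : R * X | (0 < th.1 < n.+1%:R^-1)%R /\ (`|th.2 - h| < n.+1%:R^-1)%R]]
        < 0)%E.
    apply: le_lt_trans Hd; apply: ereal_sup_ubound; exists n.+1%:R^-1 => //=.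
  move=> /ereal_inf_lt [_ [th [/andP [t0 t1] th2] <-]].
  rewrite Hx sube0 => /(@ediv_lt _ _ 0 t0); rewrite mulr0 => /ltW Hle.
  by exists th; split => //; apply/andP.
move=> /choice [f Hf].
exists (fun n => (f n).2), (fun n => (f n).1); split.
  by apply: cvg_inv_bound => n; have [] := Hf n.
split; first by move=> n; have [/andP[]] := Hf n.
split; last by move=> n; have [] := Hf n.
apply: cvg_inv_bound => n; have [/andP[t0 t1] _ _] := Hf n.
by rewrite subr0 gtr0_norm.
Qed.

End Aux.
Arguments dist_le {R X x D y}.
Arguments dist_lt {R X x D r}.

Section Ek.
Context {R : realType} {X : completeNormedModType R}.

Lemma ekeland (S : set X) (x z0 : X) (e : R) : closed S -> S z0 -> 0 < e ->
  exists z, [/\ S z, `|x - z| + e * `|z - z0| <= `|x - z0| &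
    forall y, S y -> `|x - z| <= `|x - y| + e * `|y - z|].
Proof.
move=> Sc Sz0 e0.
pose f y := `|x - y|.
pose Sw w := [set y | S y /\ f y + e * `|y - w| <= f w].
have Swrefl w : S w -> Sw w w by move=> Sw_; split => //; rewrite subrr normr0 mulr0 addr0.
have Swtrans y w' w : Sw w' y -> Sw w w' -> Sw w y.
  move=> [Sy Hy] [Sw' Hw']; split => //.
  have := ler_normD (y - w') (w' - w); rewrite addrA subrK => Htr.
  have := ler_wpM2l (ltW e0) Htr; rewrite mulrDr => Htr2.
  lra.
have step : forall p : nat * X, exists w', S p.2 ->
    Sw p.2 w' /\ f w' <= inf (f @` Sw p.2) + p.1.+1%:R^-1.
  move=> [k w] /=; case: (pselect (S w)) => Sw_; last by exists w.
  have ne : (f @` Sw w) !=set0 by exists (f w); exists w => //; exact: Swrefl.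
  have hi : has_inf (f @` Sw w).
    by split => //; exists 0 => _ [y _ <-]; rewrite /f normr_ge0.
  have kp : 0 < k.+1%:R^-1 :> R by rewrite invr_gt0.
  have [_ [w' Hw' <-] lt] := inf_adherent kp hi.
  by exists w' => _; split => //; apply: ltW.
have [g Hg] := choice step.
pose fix zs n := if n is k.+1 then g (k, zs k) else z0.
have H1 : forall k, S (zs k) /\ (Sw (zs k) (zs k.+1) /\
    f (zs k.+1) <= inf (f @` Sw (zs k)) + k.+1%:R^-1).
  elim => [|k [Sk Hk]].
    by split => //; apply: (Hg (0%N, z0)).
  have [Sk1 _] := Hk.1.
  by split => //; apply: (Hg (k.+1, zs k.+1)).
have H2 : forall k m, (k <= m)%N -> Sw (zs k) (zs m).
  move=> k; elim => [|m IH].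
    by rewrite leqn0 => /eqP ->; apply: Swrefl; exact: (H1 0%N).1.
  rewrite leq_eqVlt => /orP [/eqP ->|]; first by apply: Swrefl; exact: (H1 m.+1).1.
  by rewrite ltnS => /IH; apply: Swtrans; exact: (H1 m).2.1.
have H3 : forall k y, Sw (zs k.+1) y -> e * `|y - zs k.+1| <= k.+1%:R^-1.
  move=> k y Hy.
  have Hy' : Sw (zs k) y by apply: Swtrans Hy (H1 k).2.1.
  have : inf (f @` Sw (zs k)) <= f y.
    apply: ge_inf; last by exists y.
    by exists 0 => _ [u _ <-]; rewrite /f normr_ge0.
  have := (H1 k).2.2; move: Hy => [_]. set A := inf _; set B := (k.+1%:R^-1); set C := f y; set D := f (zs k.+1); lra.
have H4 : forall k m, (k < m)%N -> `|zs m - zs k.+1| <= k.+1%:R^-1 / e.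
  move=> k m km; rewrite ler_pdivlMr // mulrC; apply: H3; exact: H2.
have Hsmall : forall c : R, 0 < c -> exists k : nat, k.+1%:R^-1 < c.
  move=> c c0; have [N _ /(_ N (leqnn N)) HN] := near_infty_natSinv_lt (PosNum c0).
  by exists N.
have cz : cvg (zs @ \oo).
  apply: cauchy_cvg; apply: cauchy_exP => eps eps0.
  have [k Hk] := Hsmall (e * eps) (mulr_gt0 e0 eps0).
  exists (zs k.+1); exists k.+1 => // m /= km.
  rewrite -ball_normE /ball_ /= distrC.
  apply: le_lt_trans (H4 k m km) _.
  by rewrite ltr_pdivrMr // mulrC.
have [z zz] := (iffLR (cvg_ex _)) cz.
have Sz : S z.
  apply: (closed_cvg _ Sc _ _ zz).
  by apply: nearW => n; exact: (H1 n).1.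
have H5 : forall k, f z + e * `|z - zs k| <= f (zs k).
  move=> k; apply/ler_addgt0Pr => c c0.
  have ce : 0 < c / (1 + e) by rewrite divr_gt0 // addr_gt0.
  have [N _ HN] : \forall n \near \oo, `|z - zs n| < c / (1 + e) by apply: cvgr_dist_lt.
  have := HN (maxn N k) (leq_maxl N k); set n := maxn N k => Hn.
  have [_ Hk] := H2 k n (leq_maxr N k).
  have t1 := ler_normD (x - zs n) (zs n - z).
  rewrite addrA subrK in t1.
  have t2 := ler_normD (z - zs n) (zs n - zs k).
  rewrite addrA subrK in t2.
  have t3 := ler_wpM2l (ltW e0) t2.
  rewrite mulrDr in t3.
  move: Hn; rewrite ltr_pdivlMr ?addr_gt0 // => Hn.
  rewrite (distrC (zs n) z) in t1.
  move: Hk t1 t3 Hn; rewrite /f.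
  set a := `|x - z|; set b := `|x - zs n|; set d := `|z - zs n|.
  set d2 := `|zs n - zs k|; set d3 := `|z - zs k|; set b2 := `|x - zs k|.
  nra.
exists z; split => //; first exact: (H5 0%N).
move=> y Sy.
have [//|lt] := leP (`|x - z|) (`|x - y| + e * `|y - z|).
have Hyz : Sw z y by split => //; apply: ltW.
have Hk : forall k, e * `|y - z| <= 2 * k.+1%:R^-1.
  move=> k.
  have Hzk : Sw (zs k.+1) z by split => //; exact: H5.
  have h1 := H3 k y (Swtrans _ _ _ Hyz Hzk).
  have h2 := H3 k z Hzk.
  have t := ler_normD (y - zs k.+1) (zs k.+1 - z).
  rewrite addrA subrK (distrC (zs k.+1) z) in t.
  have t' := ler_wpM2l (ltW e0) t; rewrite mulrDr in t'.
  move: h1 h2 t'; set B := k.+1%:R^-1; lra.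
have y0 : `|y - z| = 0.
  apply/eqP; rewrite eq_le normr_ge0 andbT; apply/ler_addgt0Pr => c c0.
  rewrite add0r.
  have [k Hk'] := Hsmall (e * c / 2) (divr_gt0 (mulr_gt0 e0 c0) (ltr0Sn _ 1)).
  have := Hk k; move: Hk'; set B := k.+1%:R^-1 => Hk' Hk2.
  rewrite -(ler_pM2l e0); lra.
move: y0 => /normr0_eq0 /subr0_eq yz.
by move: lt; rewrite yz subrr normr0 mulr0 addr0 ltxx.
Qed.
End Ek.

Section C.
Context {R : realType} {X : normedModType R}.

Lemma ek_tc (S : set X) (x z t : X) (e : R) : 0 <= e ->
  (forall y, S y -> `|x - z| <= `|x - y| + e * `|y - z|) ->
  tangent_cone S z t -> `|x - z| <= `|x - z - t| + e * `|t|.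
Proof.
move=> e0 H [un [sn [uu [sp [s0 Sn]]]]].
apply/ler_addgt0Pr => c c0.
have e1 : 0 < 1 + e by lra.
have ce : 0 < c / (1 + e) by rewrite divr_gt0.
have HH : \forall n \near \oo, `|sn n| < 1 /\ `|t - un n| < c / (1 + e).
  near=> n; split; near: n; [apply: cvgr0_norm_lt | apply: cvgr_dist_lt] => //.
have [N _ HN] := HH.
have [h1 h2] := HN N (leqnn N).
set s := sn N in h1 *; set u := un N in h2 *.
have spos : 0 < s := sp N.
rewrite gtr0_norm // in h1.
have Hy := H _ (Sn N); rewrite -/s -/u in Hy.
rewrite [z + s *: u - z]addrC addKr normrZ gtr0_norm // in Hy.
have conv : `|x - (z + s *: u)| <= (1 - s) * `|x - z| + s * `|x - z - u|.
  have -> : x - (z + s *: u) = (1 - s) *: (x - z) + s *: (x - z - u).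
    by rewrite scalerBl scale1r [s *: (x - z - u)]scalerBr addrA subrK opprD addrA.
  apply: le_trans (ler_normD _ _) _.
  by rewrite !normrZ (gtr0_norm spos) ger0_norm // subr_ge0 ltW.
have key : `|x - z| <= `|x - z - u| + e * `|u|.
  have : s * `|x - z| <= s * (`|x - z - u| + e * `|u|).
    move: Hy conv; set A := `|x - z|; set B := `|x - (z + s *: u)|.
    set C := `|x - z - u|; set D := `|u|; nra.
  by rewrite ler_pM2l.
have t1 : `|x - z - u| <= `|x - z - t| + `|t - u|.
  by have := ler_normD (x - z - t) (t - u); rewrite addrA subrK.
have t2 : `|u| <= `|t| + `|t - u|.
  by have := ler_normD t (u - t); rewrite addrC subrK distrC.
move: h2; rewrite ltr_pdivlMr // => h2.
have t3 := ler_wpM2l e0 t2.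
move: key t1 t3 h2.
set A := `|x - z|; set B := `|x - z - u|; set C := `|x - z - t|.
set D := `|u|; set T := `|t|; set W := `|t - u|.
nra.
Unshelve. all: by end_near. Qed.

End C.

Section D.
Context {R : realType} {X : normedModType R}.
Implicit Types (phi : X -> \bar R).

Lemma part_i_local phi (x h : X) (tau rho r eta : R) :
  phi x = 0%E -> shapiro_at (Sphi phi) x -> 0 < tau -> 0 < rho -> 0 < r -> 0 < eta ->
  (forall y, `|y - x| < rho -> (dist y (Sphi phi) <= tau%:E * maxe (phi y) 0)%E) ->
  (dH phi x h < r%:E)%E -> (dist h (Sx phi x) <= (tau * r + eta)%:E)%E.
Proof.
move=> Hx Hsh tau0 rho0 r0 eta0 EB Hd.
set S := Sphi phi.
pose kap := eta / 8.
have kap0 : 0 < kap by rewrite divr_gt0.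
pose M := tau * r + eta + `|h| + 2.
have M0 : 0 < M by rewrite /M; have := normr_ge0 h; have := mulr_gt0 tau0 r0; lra.
pose eps1 := eta / (4 * M).
have eps10 : 0 < eps1 by rewrite divr_gt0 // mulr_gt0.
have [ds ds0 Hds] := Hsh eps1 eps10.
pose K := tau * r + kap + `|h| + 1.
have K0 : 0 < K by rewrite /K; have := normr_ge0 h; have := mulr_gt0 tau0 r0; lra.
pose eps := Num.min (Num.min 1 kap) (Num.min (rho / (`|h| + 1)) (ds / K)).
have eps0 : 0 < eps.
  have a1 : 0 < rho / (`|h| + 1) by rewrite divr_gt0 //; have := normr_ge0 h; lra.
  have a2 : 0 < ds / K by rewrite divr_gt0.
  by rewrite /eps !lt_min a1 a2 kap0 ltr01.
have : (ereal_inf [set ((phi (x + th.1 *: th.2)%R - phi x) * (th.1^-1)%:E)%E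
        | th in [set th : R * X | (0 < th.1 < eps)%R /\ (`|th.2 - h| < eps)%R]]
        < r%:E)%E.
  by apply: le_lt_trans Hd; apply: ereal_sup_ubound; exists eps.
move=> /ereal_inf_lt [_ [[t h'] [/andP [t0 teps] /= hh] <-]].
rewrite Hx sube0 => /(ediv_lt _ t r t0) Hphi.
rewrite /= in t0 teps.
set y := (x + t *: h')%R in Hphi.
have epsk : eps <= kap by rewrite /eps !ge_min lexx orbT.
have eps1' : eps <= 1 by rewrite /eps !ge_min lexx.
have epsr : eps <= rho / (`|h| + 1) by rewrite /eps !ge_min lexx !orbT.
have epsd : eps <= ds / K by rewrite /eps !ge_min lexx !orbT.
have hh' : `|h'| < `|h| + 1.
  have := ler_normD (h' - h) h; rewrite subrK; lra.
have yx : `|y - x| = t * `|h'| by rewrite /y (addrC x) addrK normrZ gtr0_norm.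
have h1pos : 0 < `|h| + 1 by have := normr_ge0 h; lra.
have trho : t * (`|h| + 1) < rho.
  by rewrite -ltr_pdivlMr //; apply: lt_le_trans teps epsr.
have tK : t * K < ds.
  by rewrite -ltr_pdivlMr //; apply: lt_le_trans teps epsd.
have yrho : `|y - x| < rho.
  rewrite yx; apply: le_lt_trans trho.
  by rewrite ler_pM2l // ltW.
have Hmax : (maxe (phi y) 0 <= (t * r)%:E)%E.
  by rewrite ge_max (ltW Hphi) lee_fin mulr_ge0 // ltW.
have Hdist : (dist y S < (tau * (t * r) + t * kap)%:E)%E.
  apply: le_lt_trans (EB y yrho) _.
  apply: (@le_lt_trans _ _ (tau * (t * r))%:E).
    rewrite EFinM; apply: lee_pmul => //.
    - by rewrite lee_fin ltW.
    - by rewrite le_max lexx orbT.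
  by rewrite lte_fin ltrDl mulr_gt0.
have [s Ss ys] := dist_lt Hdist.
have Sx0 : S x by rewrite /S /Sphi /= Hx.
have sx : `|s - x| < t * K.
  have := ler_normD (s - y) (y - x); rewrite addrA subrK => tri.
  rewrite distrC in ys.
  have := mulr_gt0 t0 tau0.
  move: tri ys; rewrite yx /K.
  nra.
have xx0 : `|x - x| < ds by rewrite subrr normr0.
have Hsh2 := Hds s x Ss Sx0 (lt_trans sx tK) xx0.
have Hd2 : (dist (s - x)%R (tangent_cone S x) < (eps1 * `|s - x| + t * kap)%:E)%E.
  apply: le_lt_trans Hsh2 _; by rewrite lte_fin ltrDl mulr_gt0.
have [v Tv sv] := dist_lt Hd2.
have Tv' : Sx phi x (t^-1 *: v).
  by apply: (@tc_sub_Sx _ _ phi x Hx); apply: tc_scale => //; rewrite invr_gt0.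
apply: le_trans (dist_le Tv') _; rewrite lee_fin.
have -> : h - t^-1 *: v = t^-1 *: (t *: h - v).
  by rewrite scalerBr scalerA mulVf ?gt_eqF // scale1r.
rewrite normrZ gtr0_norm ?invr_gt0 // mulrC ler_pdivrMr //.
have -> : t *: h - v = t *: (h - h') + (y - s) + (s - x - v).
  rewrite /y scalerBr !addrA; congr (_ - _).
  by rewrite subrK (addrAC (t *: h - t *: h') x) addrK subrK.
have tri1 := ler_normD (t *: (h - h') + (y - s)) (s - x - v).
have tri2 := ler_normD (t *: (h - h')) (y - s).
rewrite normrZ gtr0_norm // in tri2.
have hh2 : `|h - h'| < kap by rewrite distrC; apply: lt_le_trans hh _.
have hh3 : t * `|h - h'| <= t * kap by rewrite ler_pM2l // ltW.
have e1K : eps1 * K <= eta / 4.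
  rewrite /eps1 mulrC mulrA ler_pdivrMr ?mulr_gt0 //.
  have : K <= M by rewrite /K /M /kap; have := normr_ge0 h; lra.
  move=> KM; nra.
have sx2 : eps1 * `|s - x| <= eps1 * (t * K) by rewrite ler_pM2l // ltW.
have : eps1 * (t * K) <= t * (eta / 4) by rewrite mulrCA ler_pM2l.
move: tri1 tri2 ys sv hh3 sx2; rewrite /kap.
set A := `|_ + _ + _|; set B := `|t *: _ + _|; set C := `|y - s|; set D := `|s - x - v|.
set E := `|h - h'|; set F := eps1 * `|s - x|.
nra.
Qed.

Lemma nbhs_rad (x : X) (U : set X) : nbhs x U ->
  exists2 d : R, 0 < d & forall y, `|y - x| < d -> U y.
Proof.
move=> /nbhs_normP [d d0 Hd]; exists d => // y yx; apply: Hd.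
by rewrite /ball_ /= distrC.
Qed.

Lemma bd_S phi (x : X) : bd (Sphi phi) `<=` [set x | phi x = 0%E] ->
  bd (Sphi phi) x -> phi x = 0%E /\ Sphi phi x.
Proof. by move=> Hb /Hb /= Hx; split => //; rewrite /Sphi /= Hx. Qed.

Lemma part_i phi (xbar : X) :
  bd (Sphi phi) `<=` [set x | phi x = 0%E] ->
  shapiro_around (Sphi phi) xbar ->
  (forall tau delta0 : R, 0 < tau -> 0 < delta0 ->
    (forall x, `|x - xbar| < delta0 ->
       (dist x (Sphi phi) <= tau%:E * maxe (phi x) 0)%E) ->
    exists2 delta : R, 0 < delta &
      forall x, bd (Sphi phi) x -> `|x - xbar| < delta ->
        forall h : X,
          (dist h (Sx phi x) <= tau%:E * maxe (dH phi x h) 0)%E).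
Proof.
move=> Hbd [U HUn HU] tau delta0 tau0 d00 EB.
have [d1 d10 Hd1] := nbhs_rad _ _ HUn.
exists (Num.min delta0 d1); first by rewrite lt_min d00 d10.
move=> x bx; rewrite lt_min => /andP [xd0 xd1] h.
have [Hx Sx0] := @bd_S phi x Hbd bx.
have Hsh := HU x Sx0 (Hd1 x xd1).
have rho0 : 0 < delta0 - `|x - xbar| by rewrite subr_gt0.
have EB' : forall y, `|y - x| < delta0 - `|x - xbar| ->
    (dist y (Sphi phi) <= tau%:E * maxe (phi y) 0)%E.
  move=> y yx; apply: EB.
  have := ler_normD (y - x) (x - xbar); rewrite addrA subrK; lra.
have hSx : (dH phi x h <= 0)%E -> (dist h (Sx phi x) <= tau%:E * maxe (dH phi x h) 0)%E.
  move=> H0; apply: le_trans (@dist_le _ _ h (Sx phi x) h H0) _.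
  rewrite subrr normr0; apply: mule_ge0; first by rewrite lee_fin ltW.
  by rewrite le_max lexx orbT.
case Ha: (dH phi x h) => [a| |].
- case: (lerP a 0) => a0; first by rewrite -Ha; apply: hSx; rewrite Ha lee_fin.
  have -> : maxe a%:E 0 = a%:E by rewrite max_l // lee_fin ltW.
  rewrite -EFinM; apply/lee_addgt0Pr => c c0.
  have c2 : 0 < c / 2 by rewrite divr_gt0.
  have ct : 0 < c / (2 * tau) by rewrite divr_gt0 // mulr_gt0.
  have := @part_i_local phi x h tau _ (a + c / (2 * tau)) (c / 2) Hx Hsh tau0 rho0
    (addr_gt0 a0 ct) c2 EB'.
  rewrite Ha lte_fin ltrDl ct => /(_ isT).
  have -> : tau * (a + c / (2 * tau)) + c / 2 = tau * a + c.
    by field; rewrite gt_eqF.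
  by rewrite EFinD.
- rewrite maxye.
  by rewrite gt0_muley ?lte_fin // leey.
- by rewrite -Ha; apply: hSx; rewrite Ha leNye.
Qed.

End D.

Section E.
Context {R : realType} {X : completeNormedModType R}.
Implicit Types (phi : X -> \bar R).

Lemma S_closed phi : lower_semicontinuous phi -> closed (Sphi phi).
Proof.
move=> /lower_semicontinuousP /(_ 0) Ho.
have -> : Sphi phi = ~` [set x | (0%:E < phi x)%E].
  apply/funext => x; apply/propext; rewrite /Sphi /= leNgt.
  by split => [/negP|/negP].
exact: open_closedC.
Qed.

Lemma dist_sum_lt (P : X * R) (D : set (X * R)) (r : R) :
  (dist_sum P D < r%:E)%E -> exists2 q, D q & `|P.1 - q.1| + `|P.2 - q.2| < r.
Proof. by move=> /ereal_inf_lt [_ [q Dq <-]]; rewrite lte_fin => h; exists q. Qed.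

Lemma not_interior phi (x z : X) (e : R) : 0 <= e < 1 -> x != z ->
  (forall y, Sphi phi y -> `|x - z| <= `|x - y| + e * `|y - z|) ->
  ~ interior (Sphi phi) z.
Proof.
move=> /andP [e0 e1] xz Hek /(@nbhs_rad R X) [rz rz0 Hrz].
have A0 : 0 < `|x - z| by rewrite normr_gt0 subr_eq0.
pose s := Num.min (1 / 2) (rz / (2 * `|x - z|)).
have s0 : 0 < s by rewrite lt_min divr_gt0 //= divr_gt0 // mulr_gt0.
have s1 : s <= 1 / 2 by rewrite /s ge_min lexx.
have s2 : s * `|x - z| < rz.
  have : s <= rz / (2 * `|x - z|) by rewrite /s ge_min lexx orbT.
  rewrite ler_pdivlMr ?mulr_gt0 //; nra.
have yz : `|z + s *: (x - z) - z| = s * `|x - z|.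
  by rewrite (addrC z) addrK normrZ gtr0_norm.
have Sy : Sphi phi (z + s *: (x - z)) by apply: Hrz; rewrite yz.
have := Hek _ Sy; rewrite yz.
have -> : x - (z + s *: (x - z)) = (1 - s) *: (x - z).
  by rewrite opprD addrA scalerBl scale1r.
rewrite normrZ ger0_norm; last by lra.
move=> H; have : s * `|x - z| <= e * s * `|x - z| by nra.
have := mulr_gt0 s0 A0; have : 0 < 1 - e by lra.
set sA := s * _; nra.
Qed.


Lemma part_ii_rev phi (xbar : X) :
  lower_semicontinuous phi -> Sphi phi xbar ->
  bd (Sphi phi) `<=` [set x | phi x = 0%E] ->
  epi_shapiro_at phi xbar ->
  (exists2 U, nbhs xbar U &
      forall x, U x -> bd (Sphi phi) x ->
        [set h | dH phi x h = 0%E] `<=` tangent_cone (Sphi phi) x) ->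
  (exists tau delta : R, [/\ 0 < tau, 0 < delta &
      forall x, bd (Sphi phi) x -> `|x - xbar| < delta ->
        forall h : X,
          (dist h (Sx phi x) <= tau%:E * maxe (dH phi x h) 0)%E]) ->
  local_error_bound phi xbar.
Proof.
move=> lsc Sxbar Hbd Hepi [U HUn HU] [tau [delta [tau0 delta0 Hdir]]].
set S := Sphi phi.
have Sc : closed S := S_closed phi lsc.
case: (pselect (interior S xbar)) => [Hint|Hnint].
  have [r r0 Hr] := nbhs_rad _ _ Hint.
  exists 1, r; split => // x xr.
  apply: le_trans (@dist_le _ _ x S x (Hr x xr)) _.
  rewrite subrr normr0 mul1e; by rewrite le_max lexx orbT.
have bxbar : bd S xbar by split => //; exact: subset_closure.
have phixbar : phi xbar = 0%E := Hbd _ bxbar.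
have [dU dU0 HdU] := nbhs_rad _ _ HUn.
pose ee := 1 / (16 * (1 + tau)).
have ee0 : 0 < ee by rewrite divr_gt0 // mulr_gt0 //; lra.
have [de de0 Hde] := Hepi ee ee0.
pose m := Num.min delta (Num.min dU de).
have m0 : 0 < m by rewrite /m !lt_min delta0 dU0 de0.
have md : m <= delta by rewrite /m ge_min lexx.
have mU : m <= dU by rewrite /m !ge_min lexx orbT.
have me : m <= de by rewrite /m !ge_min lexx !orbT.
pose tau' := 8 * tau + 8.
exists tau', (m / 16); split; first by rewrite /tau'; lra.
  by rewrite divr_gt0.
move=> x xd.
rewrite leNgt; apply/negP => Hcon.
have xd' : `|x - xbar| < m / 16 := xd.
have Hin : ~ S x.
  move=> Sx0; move: Hcon; apply/negP; rewrite -leNgt.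
  apply: le_trans (@dist_le _ _ x S x Sx0) _.
  rewrite subrr normr0; apply: mule_ge0; first by rewrite lee_fin /tau'; lra.
  by rewrite le_max lexx orbT.
case Hp : (phi x) => [p| |] in Hcon.
- case: (lerP p 0) => p0.
    by exfalso; apply: Hin; rewrite /S /Sphi /= Hp lee_fin.
  move: Hcon; rewrite max_l ?lee_fin ?ltW // -EFinM => Hcon.
  have e80 : 0 < 1 / 8 :> R by [].
  have [z [Sz Hz0 Hek]] := ekeland S x xbar (1 / 8) Sc Sxbar e80.
  have HA : tau' * p < `|x - z|.
    by rewrite -lte_fin; apply: lt_le_trans Hcon (@dist_le _ _ x S z Sz).
  have tp0 : 0 < tau' * p by rewrite mulr_gt0 // /tau'; lra.
  have A0 : 0 < `|x - z| by apply: lt_trans HA.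
  have zx : `|z - xbar| <= 8 * `|x - xbar|.
    by move: Hz0; have := normr_ge0 (x - z); lra.
  have Ax : `|x - z| <= `|x - xbar|.
    by move: Hz0; have := normr_ge0 (z - xbar); lra.
  have xz : x != z by rewrite -subr_eq0 -normr_gt0.
  have nint : ~ interior S z.
    apply: (@not_interior phi x z (1 / 8)) => //; apply/andP; split; lra.
  have bz : bd S z by split; [exact: (@subset_closure _ S z Sz) | exact: nint].
  have phiz : phi z = 0%E := Hbd _ bz.
  have pA : 8 * tau * p + 8 * p < `|x - z| by move: HA; rewrite /tau'; lra.
  have epiP : epi phi (x, p) by rewrite /epi /= Hp.
  have epiQ : epi phi (z, 0%R) by rewrite /epi /= phiz.
  have condP : (`|(x, p).1 - xbar|%:E + `|((x, p).2)%:E - phi xbar| < de%:E)%E.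
    rewrite phixbar sube0 /= -EFinD lte_fin gtr0_norm //.
    have : 0 <= tau * p by rewrite mulr_ge0 // ltW.
    move: xd' pA Ax me; lra.
  have condQ : (`|((z, 0%R) : X * R).1 - xbar|%:E + `|((((z, 0%R) : X * R).2)%:E - phi xbar)%E| < de%:E)%E.
    rewrite phixbar /= subrr normr0 addr0 lte_fin.
    move: zx xd' me; lra.
  have Hsh := Hde _ _ epiP epiQ condP condQ.
  rewrite /= subr0 in Hsh.
  pose kap := `|x - z| / (16 * (2 + tau)).
  have kap0 : 0 < kap by rewrite divr_gt0 // mulr_gt0 //; lra.
  have Hsh' : (dist_sum ((x - z)%R, p) (epi_tangent_cone phi z 0) <
        (ee * (`|x - z| + `|p|) + kap)%:E)%E.
    by apply: le_lt_trans Hsh _; rewrite lte_fin ltrDl.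
  have [[v w] Ew /= Hvw] := dist_sum_lt _ _ _ Hsh'.
  have Hdv : (dH phi z v <= w%:E)%E := epi_tc_dH phi z v w phiz Ew.
  have zd : `|z - xbar| < delta by move: zx xd' md; lra.
  have zU : U z by apply: HdU; move: zx xd' mU; lra.
  have Hd1 := Hdir z bz zd v.
  have Hd2 : (dist v (Sx phi z) < (tau * `|w| + kap)%:E)%E.
    apply: le_lt_trans Hd1 _.
    apply: (@le_lt_trans _ _ (tau * `|w|)%:E); last by rewrite lte_fin ltrDl.
    rewrite EFinM; apply: lee_pmul => //.
    - by rewrite lee_fin ltW.
    - by rewrite le_max lexx orbT.
    - rewrite ge_max lee_fin normr_ge0 andbT.
      by apply: le_trans Hdv _; rewrite lee_fin ler_norm.
  have [t St Hvt] := dist_lt Hd2.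
  have Tt : tangent_cone S z t.
    move: St; rewrite /Sx /= le_eqVlt => /orP [/eqP H0|H0].
      exact: (HU z zU bz t H0).
    exact: dHneg_tc phi z t phiz H0.
  have e8 : 0 <= 1 / 8 :> R by lra.
  have Hk := ek_tc S x z t (1 / 8) e8 Hek Tt.
  rewrite (gtr0_norm p0) in Hvw.
  have w1 : `|w| <= p + `|p - w|.
    by have := ler_normD p (w - p); rewrite (addrC p) subrK (gtr0_norm p0) distrC.
  have t1 : `|x - z - t| <= `|x - z - v| + `|v - t|.
    by have := ler_normD (x - z - v) (v - t); rewrite addrA subrK.
  have t2 : `|t| <= `|x - z| + `|x - z - v| + `|v - t|.
    have e : (x - z) - (x - z - v) - (v - t) = t by rewrite !subKr.
    have := ler_normB ((x - z) - (x - z - v)) (v - t); rewrite e => h.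
    by apply: le_trans h _; rewrite lerD2r ler_normB.
  set A := `|x - z|.
  set a1 := `|x - z - v| in Hvw t1 t2.
  set b1 := `|p - w| in Hvw w1.
  set c1 := `|v - t| in Hvt t1 t2.
  set E0 := ee * (A + p) + kap in Hvw.
  have b1E : tau * b1 <= tau * E0.
    have a10 : 0 <= a1 by apply: normr_ge0.
    by rewrite ler_pM2l //; apply: ltW; lra.
  have tw : tau * `|w| <= tau * p + tau * b1 by rewrite -mulrDr ler_pM2l.
  have F1 : E0 + tau * E0 = (A + p) / 16 + kap + tau * kap.
    rewrite /E0 /ee /kap; field.
    by apply/andP; split; rewrite gt_eqF //; lra.
  have F2 : 2 * kap + tau * kap = A / 16.
    rewrite /kap /A; field; rewrite gt_eqF //; lra.
  have := normr_ge0 (x - z - v); have := normr_ge0 t.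
  move: Hk t1 t2 Hvt Hvw b1E tw F1 F2 pA A0.
  set N1 := `|x - z - t|; set N2 := `|t|; set W := `|w|.
  set tb := tau * b1; set tE := tau * E0; set tk := tau * kap; set tW := tau * W.
  set tp := tau * p.
  have : 8 * tau * p = 8 * tp by rewrite /tp mulrA.
  have b10 : 0 <= b1 by apply: normr_ge0.
  move: b10; rewrite /A; lra.
- have Hm : (maxe +oo 0 = +oo :> \bar R)%E.
    by apply/eqP; rewrite eq_le leey.
  move: Hcon; rewrite Hm gt0_muley ?lte_fin; first by rewrite ltNge leey.
  by rewrite /tau'; lra.
- by exfalso; apply: Hin; rewrite /S /Sphi /= Hp leNye.
Qed.

End E.


Theorem corollary4p1 (R : realType) (X : completeNormedModType R)
    (phi : X -> \bar R) (xbar : X) :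
  proper_fun phi -> lower_semicontinuous phi ->
  Sphi phi xbar ->
  bd (Sphi phi) `<=` [set x | phi x = 0%E] ->
  epi_shapiro_at phi xbar ->
  shapiro_around (Sphi phi) xbar ->
  (* (i) *)
  (forall tau delta0 : R, 0 < tau -> 0 < delta0 ->
    (forall x, `|x - xbar| < delta0 ->
       (dist x (Sphi phi) <= tau%:E * maxe (phi x) 0)%E) ->
    exists2 delta : R, 0 < delta &
      forall x, bd (Sphi phi) x -> `|x - xbar| < delta ->
        forall h : X,
          (dist h (Sx phi x) <= tau%:E * maxe (dH phi x h) 0)%E)
  /\
  (* (ii) *)
  ((exists2 U, nbhs xbar U &
      forall x, U x -> bd (Sphi phi) x ->
        [set h | dH phi x h = 0%E] `<=` tangent_cone (Sphi phi) x) ->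
   (local_error_bound phi xbar <->
    exists tau delta : R, [/\ 0 < tau, 0 < delta &
      forall x, bd (Sphi phi) x -> `|x - xbar| < delta ->
        forall h : X,
          (dist h (Sx phi x) <= tau%:E * maxe (dH phi x h) 0)%E])).
Proof.
move=> _ lsc Sxbar Hbd Hepi Hsh.
have Pi := part_i phi xbar Hbd Hsh.
split; first exact: Pi.
move=> HU; split.
- move=> [tau [delta [tau0 delta0 EB]]].
  have [d d0 Hd] := Pi tau delta tau0 delta0 EB.
  by exists tau, d.
- exact: (part_ii_rev phi xbar lsc Sxbar Hbd Hepi HU).
Qed.
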